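(* Let $k>2$ be an integer with $k\equiv 2 \pmod 4$ and let $n=\frac{1}{4}k^2-1$. If $\frac{k}{2}$ is not a prime, then any function $f:[n]\to \{-1,1\}$ with $f([n])=0$ admits a $k$-term arithmetic progression $A\subseteq[n]$ with $f(A)=0$.
   Context: $[n]=\{1,\dots,n\}$; $f(Y)=\sum_{y\in Y}f(y)$. *)

(* Defs.v *)
From mathcomp Require Import all_boot all_order all_algebra.
Set Implicit Arguments. Unset Strict Implicit. Unset Printing Implicit Defensive.
Import Order.TTheory GRing.Theory Num.Theory.

Definition kAP (k a d : nat) : seq nat := [seq a + i * d | i <- iota 0 k].

(* A is a k-term AP contained in [n] = {1,...,n} (with positive difference,
   so that A has exactly k elements). *)
Definition kAP_in (n k a d : nat) : Prop :=
  (0 < d)%N /\ (1 <= a)%N /\ (a + (k - 1) * d <= n)%N.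

(* Main.v *)
Require Import Defs.
From mathcomp Require Import all_boot all_order all_algebra zify.
From Stdlib Require Import Classical.
Import Order.TTheory GRing.Theory Num.Theory.

Definition Fs (f : nat -> int) (x : nat) : int := (\sum_(1 <= y < x.+1) f y)%R.

Lemma Fs_S f x : Fs f x.+1 = (Fs f x + f x.+1)%R.
Proof. by rewrite /Fs big_nat_recr. Qed.

Lemma Fs0 f : Fs f 0 = 0%R.
Proof. by rewrite /Fs big_geq. Qed.

Lemma Fs_win f b L : (\sum_(0 <= i < L) f (b + 1 + i)%N = Fs f (b + L) - Fs f b)%R.
Proof.
elim: L => [|L IH]; first by rewrite big_geq // addn0 subrr.
rewrite big_nat_recr // IH.
have -> : (b + 1 + L = (b + L).+1) by lia.
have -> : (b + L.+1 = (b + L).+1) by lia.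
by rewrite Fs_S addrAC.
Qed.

Lemma kAP_sum (f : nat -> int) k a d : (\sum_(x <- kAP k a d) f x = \sum_(0 <= i < k) f (a + i * d)%N)%R.
Proof. by rewrite /kAP big_map /index_iota subn0. Qed.

Lemma FsN f x : Fs (fun y => - f y)%R x = (- Fs f x)%R.
Proof. by rewrite /Fs sumrN. Qed.

Section Key.
Variables (f : nat -> int) (n m : nat).
Hypothesis Hstep : forall x, x < n -> (f x.+1 = 1 \/ f x.+1 = -1)%R.
Hypothesis Hn : Fs f n = 0%R.
Hypothesis Hwin : forall b, b + 2 * m <= n -> (2 <= Fs f (b + 2 * m) - Fs f b)%R.

Lemma lipd d x : x + d <= n -> (Fs f (x + d) - Fs f x <= d%:Z)%R /\ (Fs f x - Fs f (x + d) <= d%:Z)%R.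
Proof.
elim: d => [|d IH] H; first by rewrite addn0 subrr.
have H' : x + d < n by rewrite addnS in H.
have [H1 H2] := IH (ltnW H').
rewrite addnS Fs_S.
have := Hstep _ H'.
lia.
Qed.

Lemma lip x y : x <= y -> y <= n ->
  (Fs f y - Fs f x <= (y - x)%:Z)%R /\ (Fs f x - Fs f y <= (y - x)%:Z)%R.
Proof. move=> Hxy Hy; have := @lipd (y - x) x; rewrite subnKC //; exact. Qed.

Lemma chain i b c : c = b + 2 * m * i -> c <= n -> (Fs f b + (2 * i)%:Z <= Fs f c)%R.
Proof.
elim: i c => [|i IH] c ->; first by rewrite muln0 addn0 muln0 addr0 lexx.
move=> Hc.
have E : b + 2 * m * i.+1 = (b + 2 * m * i) + 2 * m by rewrite mulnS; lia.
rewrite E in Hc *.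
have := IH _ erefl (leq_trans (leq_addr _ _) Hc).
have := Hwin _ Hc.
lia.
Qed.

Variable h : nat.
Hypothesis Hm : m = 2 * h + 1.
Hypothesis Hnh : n = 2 * m * h + 2 * h.

Lemma upper j t : j <= h -> t <= m - 1 -> (Fs f (2 * m * j + t) <= (2 * j)%:Z - t%:Z)%R.
Proof.
move=> hj ht.
have C := @chain (h - j) (2 * m * j + t) (2 * m * h + t).
have E : 2 * m * h + t = 2 * m * j + t + 2 * m * (h - j).
  have -> : h = j + (h - j) by lia.
  rewrite mulnDr; lia.
have Hle : 2 * m * h + t <= n by lia.
have C' := C E Hle.
have [L1 L2] := @lip (2 * m * h + t) n Hle (leqnn n).
rewrite Hn in L1 L2.
rewrite (_ : n - (2 * m * h + t) = 2 * h - t) in L2; last by lia.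
lia.
Qed.

Lemma lower j t : 2 * m * j + t <= n -> ((2 * j)%:Z - t%:Z <= Fs f (2 * m * j + t))%R.
Proof.
move=> H.
have C := @chain j t (2 * m * j + t) (addnC _ _) H.
have [L1 L2] := @lip 0 t (leq0n t) (leq_trans (leq_addl _ _) H).
rewrite Fs0 subn0 in L1 L2.
lia.
Qed.

Lemma fdet x : x < n -> f x.+1 = (if (x %% (2 * m) < m - 1)%N then -1 else 1)%R.
Proof.
move=> Hx.
have Hm0 : 0 < 2 * m by lia.
have Ex := div.divn_eq x (2 * m).
have Ht : x %% (2 * m) < 2 * m by rewrite ltn_mod.
move: Ex Ht; set j := x %/ (2 * m); set t := x %% (2 * m) => Ex Ht.
have Ex' : x = 2 * m * j + t by rewrite Ex mulnC.
have Hs := Hstep _ Hx.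
have FS := Fs_S f x.
case: ifP => Hc.
- have hj : j <= h.
    case: (leqP j h) => // hj.
    have : 2 * m * (h + 1) <= 2 * m * j by rewrite leq_pmul2l // addn1.
    lia.
  have U := @upper j t.+1 hj ltac:(lia).
  have L := @lower j t ltac:(lia).
  rewrite -Ex' in L; rewrite addnS -Ex' FS in U.
  lia.
- have hj : j + 1 <= h.
    case: (leqP (j + 1) h) => // hj.
    have : 2 * m * h <= 2 * m * j by rewrite leq_pmul2l //; lia.
    lia.
  have hh : 2 * m * (j + 1) <= 2 * m * h by rewrite leq_pmul2l.
  have E2 : 2 * m * (j + 1) = 2 * m * j + 2 * m by rewrite mulnDr muln1.
  have U := @upper j (m - 1) ltac:(lia) (leqnn _).
  have L := @lower (j + 1) 0 ltac:(lia).
  have [L1 L2] := @lip (2 * m * j + (m - 1)) x ltac:(lia) (ltnW Hx).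
  have [L3 L4] := @lip x.+1 (2 * m * (j + 1) + 0) ltac:(lia) ltac:(lia).
  rewrite FS in L3 L4.
  rewrite (_ : 2 * m * (j + 1) + 0 - x.+1 = 2 * m - t - 1) in L3 L4; last by lia.
  rewrite (_ : x - (2 * m * j + (m - 1)) = t - (m - 1)) in L1 L2; last by lia.
  lia.
Qed.
End Key.



Lemma Fpar (f : nat -> int) n : (forall x, x < n -> (f x.+1 = 1 \/ f x.+1 = -1)%R) ->
  forall x, x <= n -> exists z : int, Fs f x = (x%:Z - 2 * z)%R.
Proof.
move=> Hs; elim=> [|x IH] Hx; first by exists 0%R; rewrite Fs0.
have [z Hz] := IH (ltnW Hx).
rewrite Fs_S Hz.
case: (Hs x Hx) => ->; [exists z | exists (z + 1)%R]; lia.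
Qed.

Lemma propag (f : nat -> int) n m :
  (forall x, x < n -> (f x.+1 = 1 \/ f x.+1 = -1)%R) ->
  (forall b, b + 2 * m <= n -> (Fs f (b + 2 * m) - Fs f b <> 0)%R) ->
  (0 < Fs f (2 * m) - Fs f 0)%R ->
  forall b, b + 2 * m <= n -> (2 <= Fs f (b + 2 * m) - Fs f b)%R.
Proof.
move=> Hs Hnz H0.
have Hev : forall b, b + 2 * m <= n -> exists w : int, (Fs f (b + 2 * m) - Fs f b = 2 * w)%R.
  move=> b Hb.
  have [z1 E1] := @Fpar f n Hs _ Hb.
  have [z2 E2] := @Fpar f n Hs _ (leq_trans (leq_addr _ _) Hb).
  exists (m%:Z - z1 + z2)%R; rewrite E1 E2; lia.
elim=> [|b IH] Hb.
  have [w Hw] := Hev 0 Hb; rewrite add0n in Hw H0 *; lia.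
have Hb' : b + 2 * m <= n by lia.
have I := IH Hb'.
have [w Hw] := Hev _ Hb.
have Z := Hnz _ Hb.
have E : b.+1 + 2 * m = (b + 2 * m).+1 by lia.
rewrite E Fs_S Fs_S in Hw Z *.
have := Hs (b + 2 * m) ltac:(lia); have := Hs b ltac:(lia).
lia.
Qed.

Lemma patsum p q : 2 <= p ->
  (\sum_(0 <= i < 2 * (p * q)) (if (i * p %% (2 * (p * q)) < p * q - 1)%N then -1 else 1) : int)%R = 0%R.
Proof.
move=> Hp.
have E : forall i, (i * p %% (2 * (p * q)) < p * q - 1) = (i %% (2 * q) < q).
  move=> i.
  rewrite (_ : 2 * (p * q) = 2 * q * p); last by rewrite [p * q]mulnC mulnA.
  rewrite -muln_modl.
  have : i %% (2 * q) * p < q * p = (i %% (2 * q) < q) by rewrite ltn_pmul2r //; lia.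
  case: (ltnP (i %% (2 * q)) q) => H.
    have : i %% (2 * q) * p <= (q - 1) * p by rewrite leq_pmul2r; lia.
    rewrite mulnBl mul1n => H2 _; apply/idP; rewrite mulnC; lia.
  have : q * p <= i %% (2 * q) * p by rewrite leq_pmul2r; lia.
  move=> H2 _; apply/negbTE; rewrite mulnC -leqNgt; lia.
under eq_big_nat => i _ do rewrite E.
rewrite (_ : 2 * (p * q) = 2 * q * p); last by rewrite [p * q]mulnC mulnA.
elim: p {Hp E} => [|c IH]; first by rewrite muln0 big_geq.
rewrite mulnS (big_cat_nat _ (n := 2 * q * c)) //= ?leq_addl //.
rewrite addnC IH add0r.
rewrite -{1}(add0n (2 * q * c)) big_addn addKn.
under eq_big_nat => i _ do rewrite addnC [2 * q * c]mulnC modnMDl.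
rewrite (big_cat_nat _ (n := q)) //=; last by lia.
rewrite (eq_big_nat _ _ (F2 := fun=> (-1)%R)); last by move=> i /andP[_ H]; rewrite modn_small ?H //; lia.
rewrite [X in (_ + X)%R](eq_big_nat _ _ (F2 := fun=> 1%R)); last first.
  move=> i /andP[H1 H2]; rewrite modn_small; last by lia.
  by rewrite ltnNge H1.
rewrite !sumr_const_nat; lia.
Qed.

Lemma final (f : nat -> int) n m h p q :
  m = 2 * h + 1 -> m = p * q -> 2 <= p -> 2 <= q -> n = 2 * m * h + 2 * h ->
  (forall x, x < n -> (f x.+1 = 1 \/ f x.+1 = -1)%R) ->
  Fs f n = 0%R ->
  (forall b, b + 2 * m <= n -> (2 <= Fs f (b + 2 * m) - Fs f b)%R) ->
  (\sum_(0 <= i < 2 * m) f (1 + i * p)%N = 0)%R.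
Proof.
move=> Hm Hpq Hp Hq Hnh Hs Hn Hw.
have Hb : (2 * m - 1) * p < n.
  have E1 : n = m * m - 1 by rewrite Hnh Hm; nia.
  rewrite E1 Hpq; nia.
rewrite (eq_big_nat _ _ (F2 := fun i => if (i * p %% (2 * (p * q)) < p * q - 1)%N then -1 else 1)%R).
  by rewrite Hpq; apply: patsum.
move=> i /andP[_ Hi].
rewrite add1n (@fdet f n m Hs Hn Hw h Hm Hnh (i * p)) -?Hpq //.
apply: leq_ltn_trans Hb; rewrite leq_mul2r; apply/orP; right; lia.
Qed.

Local Open Scope ring_scope.

Theorem proposition5p7 (k n : nat) (f : nat -> int) :
  (2 < k)%N -> k = 2 %[mod 4] -> n = (k ^ 2 %/ 4 - 1)%N ->
  ~~ prime (k %/ 2) ->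
  (forall x, (1 <= x <= n)%N -> f x = 1 \/ f x = -1) ->
  \sum_(1 <= x < n.+1) f x = 0 ->
  exists a d, kAP_in n k a d /\ \sum_(x <- kAP k a d) f x = 0.
Proof.
move=> Hk Hk4 Hn Hnp Hf Hsum.
set m := (k %/ 2)%N in Hnp.
have Hkm : k = (2 * m)%N by rewrite /m; move: Hk4; rewrite /= => Hk4; lia.
set h := (m %/ 2)%N.
have Hm : m = (2 * h + 1)%N by rewrite /h /m; move: Hk4; rewrite /= => Hk4; lia.
have Hm3 : (3 <= m)%N by lia.
have Hnh : n = (2 * m * h + 2 * h)%N.
  rewrite Hn Hkm expnMn (_ : 2 ^ 2 = 4)%N // mulKn // Hm; nia.
have Hm1 : (1 < m)%N by lia.
set p := pdiv m.
have Hpp : prime p := pdiv_prime Hm1.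
have Hp2 : (2 <= p)%N := prime_gt1 Hpp.
set q := (m %/ p)%N.
have Hpq : m = (p * q)%N by rewrite /q mulnC divnK // pdiv_dvd.
have Hq2 : (2 <= q)%N.
  case: (ltnP q 2) => // Hq.
  have : q = 0%N \/ q = 1%N by lia.
  case=> Hq'; first by move: Hpq; rewrite Hq' muln0; lia.
  by move: Hpq Hnp; rewrite Hq' muln1 => E; rewrite E Hpp.
have Hs : forall x, (x < n)%N -> f x.+1 = 1 \/ f x.+1 = -1.
  by move=> x Hx; apply: Hf; rewrite ltnS Hx.
have HFn : Fs f n = 0 by exact: Hsum.
have H2m : (2 * m <= n)%N by rewrite Hnh Hm; nia.
case: (classic (exists b, (b + 2 * m <= n)%N /\ Fs f (b + 2 * m) - Fs f b = 0)).
  move=> [b [Hb Hz]].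
  exists b.+1, 1%N; split; first by rewrite /kAP_in; lia.
  rewrite kAP_sum Hkm.
  under eq_big_nat => i _ do rewrite muln1 -addn1.
  by rewrite Fs_win.
move=> Hno.
have Hnz : forall b, (b + 2 * m <= n)%N -> Fs f (b + 2 * m) - Fs f b <> 0.
  by move=> b Hb Hz; apply: Hno; exists b.
have E1 : n = (m * m - 1)%N by rewrite Hnh Hm; nia.
have Hm2p : (2 * p <= m)%N by rewrite Hpq [(p * q)%N]mulnC leq_mul2r Hq2 orbT.
have Hmm : (2 * p * m <= m * m)%N by rewrite leq_mul2r Hm2p orbT.
have Hap : kAP_in n k 1 p.
  rewrite /kAP_in Hkm; split; [lia|split; [done|]]; rewrite E1.
  have : ((2 * m - 1) * p = 2 * p * m - p)%N by rewrite mulnBl mul1n mulnAC.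
  lia.
exists 1%N, p; split => //.
rewrite kAP_sum Hkm.
have V0 := Hnz 0%N ltac:(lia).
rewrite add0n in V0.
case: (ltrgtP (Fs f (2 * m) - Fs f 0) 0) => HV; last by [].
- pose g := fun y => - f y.
  have Hsg : forall x, (x < n)%N -> g x.+1 = 1 \/ g x.+1 = -1.
    by move=> x Hx; rewrite /g; case: (Hs x Hx) => ->; [right|left]; rewrite ?opprK.
  have HFg : Fs g n = 0 by rewrite FsN HFn oppr0.
  have Hnzg : forall b, (b + 2 * m <= n)%N -> Fs g (b + 2 * m) - Fs g b <> 0.
    by move=> b Hb; rewrite !FsN -opprD => /eqP; rewrite oppr_eq0 => /eqP; apply: Hnz.
  have HV' : 0 < Fs g (2 * m) - Fs g 0 by rewrite !FsN -opprD oppr_gt0.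
  have Hwg := @propag g n m Hsg Hnzg HV'.
  have := @final g n m h p q Hm Hpq Hp2 Hq2 Hnh Hsg HFg Hwg.
  by rewrite /g sumrN => /eqP; rewrite oppr_eq0 => /eqP.
- have Hw := @propag f n m Hs Hnz HV.
  exact: (@final f n m h p q Hm Hpq Hp2 Hq2 Hnh Hs HFn Hw).
Qed.
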